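(* Suppose $\kappa<\lambda$ are infinite regular cardinals and $\square^{\mathrm{ind}}(\lambda,\kappa)$ holds. Then there is a function $d:[\lambda]^2\to\kappa$ such that: (1) for all $\alpha<\beta<\gamma<\lambda$, $d(\alpha,\gamma)\le\max(d(\alpha,\beta),d(\beta,\gamma))$; (2) for all $\alpha<\beta<\gamma<\lambda$, $d(\alpha,\beta)\le\max(d(\alpha,\gamma),d(\beta,\gamma))$; (3) for every unbounded $I\subseteq\lambda$, $d``[I]^2$ is unbounded in $\kappa$.
   Context: $d(\alpha,\beta)$ denotes $d(\{\alpha,\beta\})$. For a set $C$ of ordinals, $C'$ is its set of limit points $\{\alpha\in C\mid\sup(C\cap\alpha)=\alpha\}$ (for a club $C$ in $\beta$, $\alpha<\beta$ is in $C'$ iff $\sup(C\cap\alpha)=\alpha$). For infinite regular $\kappa<\lambda$, a $\square^{\mathrm{ind}}(\lambda,\kappa)$-sequence is a matrix $\langle C_{\alpha,i}\mid\alpha<\lambda,\ i(\alpha)\le i<\kappa\rangle$ such that: (1) for all limit $\alpha<\lambda$, $i(\alpha)<\kappa$; (2) for all limit $\alpha$ and $i(\alpha)\le i<\kappa$, $C_{\alpha,i}$ is club in $\alpha$; (3) for all limit $\alpha$ and $i(\alpha)\le i<j<\kappa$, $C_{\alpha,i}\subseteq C_{\alpha,j}$; (4) for all limit $\alpha<\beta<\lambda$ and $i(\beta)\le i<\kappa$, if $\alpha\in C'_{\beta,i}$ then $i(\alpha)\le i$ and $C_{\beta,i}\cap\alpha=C_{\alpha,i}$; (5) for all limit $\alpha<\beta<\lambda$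 there is $i<\kappa$ with $\alpha\in C'_{\beta,i}$; (6) there is no club $D\subseteq\lambda$ such that for every $\alpha\in D'$ there is $i<\kappa$ with $D\cap\alpha=C_{\alpha,i}$. $\square^{\mathrm{ind}}(\lambda,\kappa)$ asserts the existence of such a sequence. *)

(* Defs.v *)
(* Ordinals / cardinals are modelled as types carrying a strict
   well-order; an ordinal is determined up to isomorphism by its order type. *)
Set Implicit Arguments.

Section Ord.
Variable T : Type.
Variable lt : T -> T -> Prop.

Definition strict_wellorder : Prop :=
  (forall x, ~ lt x x) /\
  (forall x y z, lt x y -> lt y z -> lt x z) /\
  (forall x y, lt x y \/ x = y \/ lt y x) /\
  well_founded lt.

Definition le (x y : T) : Prop := lt x y \/ x = y.

Definition is_limit (a : T) : Prop :=
  (exists z, lt z a) /\ (forall b, lt b a -> exists c, lt b c /\ lt c a).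

Definition limit_point (C : T -> Prop) (a : T) : Prop :=
  (exists z, lt z a) /\
  (forall d, lt d a -> exists c, C c /\ lt d c /\ lt c a).

Definition club_in (C : T -> Prop) (a : T) : Prop :=
  (forall x, C x -> lt x a) /\
  (forall x, lt x a -> exists y, C y /\ le x y) /\
  (forall g, lt g a -> limit_point C g -> C g).

Definition club (C : T -> Prop) : Prop :=
  (forall x, exists y, C y /\ le x y) /\
  (forall g, limit_point C g -> C g).

Definition unbounded (I : T -> Prop) : Prop :=
  forall x, exists y, I y /\ le x y.
End Ord.

Definition inj_into (A B : Type) : Prop :=
  exists f : A -> B, forall x y, f x = f y -> x = y.

Definition infinite_regular_cardinal (T : Type) (lt : T -> T -> Prop) : Prop :=
  strict_wellorder lt /\
  (forall x : T, ~ inj_into T {y : T | lt y x}) /\      (* initial ordinal *)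
  inj_into nat T /\
  (forall A : T -> Prop, unbounded lt A -> inj_into T {y : T | A y}). (* regular *)

Definition card_lt (K L : Type) : Prop := inj_into K L /\ ~ inj_into L K.

(* a square^ind(lambda,kappa)-sequence: C alpha i is C_{alpha,i}, ii alpha is i(alpha) *)
Definition square_ind_seq (L K : Type) (ltL : L -> L -> Prop) (ltK : K -> K -> Prop)
  (C : L -> K -> L -> Prop) (ii : L -> K) : Prop :=
  (forall a i, is_limit ltL a -> le ltK (ii a) i -> club_in ltL (C a i) a) /\
  (* (3) *)
  (forall a i j, is_limit ltL a -> le ltK (ii a) i -> ltK i j ->
     forall x, C a i x -> C a j x) /\
  (* (4) *)
  (forall a b i, is_limit ltL a -> is_limit ltL b -> ltL a b -> le ltK (ii b) i ->
     limit_point ltL (C b i) a ->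
     le ltK (ii a) i /\ (forall x, (C b i x /\ ltL x a) <-> C a i x)) /\
  (forall a b, is_limit ltL a -> is_limit ltL b -> ltL a b ->
     exists i, le ltK (ii b) i /\ limit_point ltL (C b i) a) /\
  (* (6) *)
  ~ (exists D : L -> Prop, club ltL D /\
       forall a, limit_point ltL D a ->
         exists i, le ltK (ii a) i /\ (forall x, (D x /\ ltL x a) <-> C a i x)).

Definition square_ind (L K : Type) (ltL : L -> L -> Prop) (ltK : K -> K -> Prop) : Prop :=
  exists C ii, @square_ind_seq L K ltL ltK C ii.

(* Main.v *)
Require Import Defs.
From Stdlib Require Import Classical ClassicalEpsilon.

Lemma least_ex (T : Type) (lt : T -> T -> Prop) (Hw : strict_wellorder lt)
  (P : T -> Prop) : (exists x, P x) -> exists m, P m /\ forall y, P y -> le lt m y.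
Proof.
  destruct Hw as [Hirr [Htr [Htot Hwf]]]. intros [x Px]. revert Px.
  induction x as [x IH] using (well_founded_ind Hwf). intros Px.
  destruct (classic (exists y, lt y x /\ P y)) as [[y [Hy Py]]|Hn].
  - exact (IH y Hy Py).
  - exists x; split; auto. intros y Py.
    destruct (Htot x y) as [h|[h|h]]; [left; auto|right; auto|].
    exfalso; apply Hn; eauto.
Qed.

Lemma le_trans' (T : Type) (lt : T -> T -> Prop) (Hw : strict_wellorder lt) x y z :
  le lt x y -> le lt y z -> le lt x z.
Proof.
  destruct Hw as [Hirr [Htr [Htot Hwf]]]. unfold le.
  intros [h|h] [h'|h']; subst; eauto.
Qed.

Lemma le_lt' (T : Type) (lt : T -> T -> Prop) (Hw : strict_wellorder lt) x y z :
  le lt x y -> lt y z -> lt x z.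
Proof.
  destruct Hw as [Hirr [Htr [Htot Hwf]]]. unfold le.
  intros [h|h] h'; subst; eauto.
Qed.

Lemma lt_le' (T : Type) (lt : T -> T -> Prop) (Hw : strict_wellorder lt) x y z :
  lt x y -> le lt y z -> lt x z.
Proof.
  destruct Hw as [Hirr [Htr [Htot Hwf]]]. unfold le.
  intros h' [h|h]; subst; eauto.
Qed.

Lemma le_tot (T : Type) (lt : T -> T -> Prop) (Hw : strict_wellorder lt) x y :
  le lt x y \/ le lt y x.
Proof.
  destruct Hw as [Hirr [Htr [Htot Hwf]]]. unfold le.
  destruct (Htot x y) as [h|[h|h]]; auto.
Qed.

Lemma not_le_lt (T : Type) (lt : T -> T -> Prop) (Hw : strict_wellorder lt) x y :
  ~ le lt x y -> lt y x.
Proof.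
  destruct Hw as [Hirr [Htr [Htot Hwf]]]. unfold le.
  destruct (Htot x y) as [h|[h|h]]; tauto.
Qed.

Lemma lp_limit (T : Type) (lt : T -> T -> Prop) (D : T -> Prop) a :
  limit_point lt D a -> is_limit lt a.
Proof.
  intros [ez H]. split; auto. intros b hb. destruct (H b hb) as [c [_ [h1 h2]]]. eauto.
Qed.

Theorem mainTheorem9 (K L : Type) (ltK : K -> K -> Prop) (ltL : L -> L -> Prop)
  (HK : infinite_regular_cardinal ltK) (HL : infinite_regular_cardinal ltL)
  (HKL : card_lt K L) (Hsq : square_ind ltL ltK) :
  exists d : L -> L -> K,
    (forall a b c, ltL a b -> ltL b c ->
       le ltK (d a c) (d a b) \/ le ltK (d a c) (d b c)) /\
    (forall a b c, ltL a b -> ltL b c ->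
       le ltK (d a b) (d a c) \/ le ltK (d a b) (d b c)) /\
    (forall I : L -> Prop, unbounded ltL I ->
       forall k : K, exists a b, I a /\ I b /\ ltL a b /\ le ltK k (d a b)).
Proof.
  destruct HK as [SK [_ [[f _] _]]]. destruct HL as [SL _].
  pose (k0 := f 0).
  pose proof SK as [irK [trK [totK wfK]]].
  pose proof SL as [irL [trL [totL wfL]]].
  destruct Hsq as [C [ii [S2 [S3 [S4 [S5 S6]]]]]].
  assert (limab : forall x, exists a, is_limit ltL a /\ ltL x a).
  { intro x. apply NNPP; intro Hn. apply S6. exists (fun y => le ltL x y).
    assert (nolp : forall g, ~ limit_point ltL (fun y => le ltL x y) g).
    { intros g Hg. apply Hn. exists g. split. eapply lp_limit; eauto.
      destruct Hg as [[z hz] H]. destruct (H z hz) as [c [hc [_ h]]].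
      eapply le_lt'; eauto. }
    split; [split|].
    - intro y. destruct (@le_tot _ _ SL x y) as [h|h]; [exists y|exists x]; split; auto; red; auto.
    - intros g hg; exfalso; exact (nolp g hg).
    - intros a ha; exfalso; exact (nolp a ha). }
  assert (phiX : forall x, {a | (is_limit ltL a /\ ltL x a) /\
            forall b, is_limit ltL b /\ ltL x b -> le ltL a b}).
  { intro x. apply constructive_indefinite_description. apply least_ex; auto. }
  pose (phi := fun x => proj1_sig (phiX x)).
  assert (phiL : forall x, is_limit ltL (phi x)) by (intro x; exact (proj1 (proj1 (proj2_sig (phiX x))))).
  assert (phigt : forall x, ltL x (phi x)) by (intro x; exact (proj2 (proj1 (proj2_sig (phiX x))))).
  assert (phimono : forall x y, ltL x y -> le ltL (phi x) (phi y)).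
  { intros x y h. apply (proj2 (proj2_sig (phiX x))). split; auto. eauto. }
  assert (phirefl : forall a b, ltL (phi a) (phi b) -> ltL a b).
  { intros a b h. destruct (totL a b) as [h'|[h'|h']]; auto.
    - subst. exfalso; eapply irL; eauto.
    - exfalso. apply (irL (phi a)). eapply lt_le'; eauto. }
  pose (Pd := fun p q i => is_limit ltL p -> is_limit ltL q -> ltL p q ->
                le ltK (ii q) i /\ limit_point ltL (C q i) p).
  assert (ddX : forall p q, {m | Pd p q m /\ forall j, Pd p q j -> le ltK m j}).
  { intros p q. apply constructive_indefinite_description. apply least_ex; auto.
    destruct (classic (is_limit ltL p /\ is_limit ltL q /\ ltL p q)) as [[h1 [h2 h3]]|hn].
    - destruct (S5 p q h1 h2 h3) as [i hi]. exists i. intros _ _ _; auto.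
    - exists k0. intros h1 h2 h3. tauto. }
  pose (dd := fun p q => proj1_sig (ddX p q)).
  assert (ddP : forall p q, is_limit ltL p -> is_limit ltL q -> ltL p q ->
                le ltK (ii q) (dd p q) /\ limit_point ltL (C q (dd p q)) p).
  { intros p q h1 h2 h3. exact (proj1 (proj2_sig (ddX p q)) h1 h2 h3). }
  assert (ddmin : forall p q j, Pd p q j -> le ltK (dd p q) j).
  { intros p q j h. exact (proj2 (proj2_sig (ddX p q)) j h). }
  assert (ddbot : forall p j, le ltK (dd p p) j).
  { intros p j. apply ddmin. intros _ _ h; exfalso; eapply irL; eauto. }
  assert (up : forall q p i j, is_limit ltL q -> le ltK (ii q) i ->
     limit_point ltL (C q i) p -> le ltK i j ->
     le ltK (ii q) j /\ limit_point ltL (C q j) p).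
  { intros q p i j hq h1 h2 [h3|h3]; [|subst; auto; fail].
    split. left; eapply le_lt'; eauto.
    destruct h2 as [ez H]; split; auto; intros d hd; destruct (H d hd) as [c [hc r]];
      exists c; split; [eapply S3; eauto|auto]. }
  assert (tr1 : forall p q r m, is_limit ltL q -> is_limit ltL r -> ltL q r ->
     le ltK (ii r) m -> limit_point ltL (C r m) q -> limit_point ltL (C q m) p ->
     ltL p q -> le ltK (ii r) m /\ limit_point ltL (C r m) p).
  { intros p q r m hq hr hqr h1 h2 h3 hpq. destruct (S4 q r m hq hr hqr h1 h2) as [_ Hc].
    split; auto. destruct h3 as [ez H]; split; auto; intros d hd;
    destruct (H d hd) as [c [hc [h4 h5]]]; exists c; split; [exact (proj1 (proj2 (Hc c) hc))|auto]. }
  assert (tr2 : forall p q r m, is_limit ltL q -> is_limit ltL r -> ltL q r ->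
     le ltK (ii r) m -> limit_point ltL (C r m) q -> limit_point ltL (C r m) p ->
     ltL p q -> le ltK (ii q) m /\ limit_point ltL (C q m) p).
  { intros p q r m hq hr hqr h1 h2 h3 hpq. destruct (S4 q r m hq hr hqr h1 h2) as [E Hc].
    split; auto. destruct h3 as [ez H]; split; auto; intros d hd;
    destruct (H d hd) as [c [hc [h4 h5]]]; exists c; split; [apply (proj1 (Hc c)); split; eauto|auto]. }
  assert (tri1 : forall p q r, is_limit ltL p -> is_limit ltL q -> is_limit ltL r ->
     ltL p q -> ltL q r -> le ltK (dd p r) (dd p q) \/ le ltK (dd p r) (dd q r)).
  { intros p q r hp hq hr hpq hqr.
    destruct (ddP p q hp hq hpq) as [A1 A2]. destruct (ddP q r hq hr hqr) as [B1 B2].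
    destruct (@le_tot _ _ SK (dd p q) (dd q r)) as [hm|hm].
    - right. apply ddmin. intros _ _ _.
      destruct (up q p _ _ hq A1 A2 hm) as [E1 E2]. exact (tr1 p q r _ hq hr hqr B1 B2 E2 hpq).
    - left. apply ddmin. intros _ _ _.
      destruct (up r q _ _ hr B1 B2 hm) as [E1 E2]. exact (tr1 p q r _ hq hr hqr E1 E2 A2 hpq). }
  assert (tri2 : forall p q r, is_limit ltL p -> is_limit ltL q -> is_limit ltL r ->
     ltL p q -> ltL q r -> le ltK (dd p q) (dd p r) \/ le ltK (dd p q) (dd q r)).
  { intros p q r hp hq hr hpq hqr. assert (hpr : ltL p r) by eauto.
    destruct (ddP p r hp hr hpr) as [A1 A2]. destruct (ddP q r hq hr hqr) as [B1 B2].
    destruct (@le_tot _ _ SK (dd p r) (dd q r)) as [hm|hm].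
    - right. apply ddmin. intros _ _ _.
      destruct (up r p _ _ hr A1 A2 hm) as [E1 E2]. exact (tr2 p q r _ hq hr hqr B1 B2 E2 hpq).
    - left. apply ddmin. intros _ _ _.
      destruct (up r q _ _ hr B1 B2 hm) as [E1 E2]. exact (tr2 p q r _ hq hr hqr E1 E2 A2 hpq). }
  exists (fun a b => dd (phi a) (phi b)). cbv beta. split; [|split].
  - intros a b c hab hbc.
    destruct (phimono a b hab) as [h1|h1]; destruct (phimono b c hbc) as [h2|h2].
    + apply tri1; auto.
    + left; rewrite h2; right; reflexivity.
    + right; rewrite h1; right; reflexivity.
    + right; rewrite h1; right; reflexivity.
  - intros a b c hab hbc.
    destruct (phimono a b hab) as [h1|h1]; destruct (phimono b c hbc) as [h2|h2].
    + apply tri2; auto.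
    + left; rewrite h2; right; reflexivity.
    + left; rewrite h1; apply ddbot.
    + left; rewrite h1; apply ddbot.
  - intros I HI k. apply NNPP; intro Hn.
    assert (Hb : forall a b, I a -> I b -> ltL (phi a) (phi b) -> ltK (dd (phi a) (phi b)) k).
    { intros a b ha hb h. apply (@not_le_lt _ _ SK). intro hk. apply Hn. exists a, b.
      repeat split; auto. }
    pose (J := fun q => exists a, I a /\ phi a = q).
    assert (Jub : forall x, exists q, J q /\ ltL x q).
    { intro x. destruct (HI x) as [a [ha hx]]. exists (phi a).
      split; [exists a; auto| eapply le_lt'; eauto]. }
    assert (Jlim : forall q, J q -> is_limit ltL q).
    { intros q [a [_ <-]]; auto. }
    assert (JJ : forall p q, J p -> J q -> ltL p q -> le ltK (ii q) k /\ limit_point ltL (C q k) p).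
    { intros p q [a [ha <-]] [b [hb <-]] h.
      destruct (ddP _ _ (phiL a) (phiL b) h) as [E1 E2].
      apply (up _ _ _ _ (phiL b) E1 E2). left. apply Hb; auto. }
    pose (J2 := fun q => J q /\ exists p, J p /\ ltL p q).
    assert (J2ub : forall x, exists q, J2 q /\ ltL x q).
    { intro x. destruct (Jub x) as [q0 [h0 h0']]. destruct (Jub q0) as [q1 [h1 h1']].
      exists q1; split; [split; eauto|eauto]. }
    assert (J2ii : forall q, J2 q -> le ltK (ii q) k).
    { intros q [hq [p [hp hpq]]]. exact (proj1 (JJ p q hp hq hpq)). }
    pose (D := fun x => exists q, J2 q /\ C q k x).
    assert (claim : forall q x, J2 q -> ltL x q -> (D x <-> C q k x)).
    { intros q x hq hx. split; [|intro; exists q; auto].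
      intros [q' [hq' hc]]. destruct (totL q q') as [h|[h|h]].
      - destruct (JJ q q' (proj1 hq) (proj1 hq') h) as [E1 E2].
        destruct (S4 q q' k (Jlim _ (proj1 hq)) (Jlim _ (proj1 hq')) h (J2ii q' hq') E2) as [_ Hc].
        apply (proj1 (Hc x)); auto.
      - subst; auto.
      - destruct (JJ q' q (proj1 hq') (proj1 hq) h) as [E1 E2].
        destruct (S4 q' q k (Jlim _ (proj1 hq')) (Jlim _ (proj1 hq)) h (J2ii q hq) E2) as [_ Hc].
        exact (proj1 (proj2 (Hc x) hc)). }
    assert (lpt : forall q g, J2 q -> ltL g q -> limit_point ltL D g -> limit_point ltL (C q k) g).
    { intros q g hq hgq [ez H]; split; auto; intros d hd; destruct (H d hd) as [c [hc [h4 h5]]];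
      exists c; split; [apply (proj1 (claim q c hq (trL _ _ _ h5 hgq)) hc)|auto]. }
    apply S6. exists D. split; [split|].
    + intro x. destruct (J2ub x) as [q [hq hxq]].
      destruct (S2 q k (Jlim _ (proj1 hq)) (J2ii q hq)) as [_ [Hu _]].
      destruct (Hu x hxq) as [y [hy hxy]]. exists y; split; auto; exists q; auto.
    + intros g hg. destruct (J2ub g) as [q [hq hgq]].
      destruct (S2 q k (Jlim _ (proj1 hq)) (J2ii q hq)) as [_ [_ Hcl]].
      exists q; split; [exact hq|apply Hcl; [exact hgq|apply lpt; auto]].
    + intros a ha. destruct (J2ub a) as [q [hq haq]].
      destruct (S4 a q k (@lp_limit _ _ _ _ ha) (Jlim _ (proj1 hq)) haq (J2ii q hq) (lpt q a hq haq ha)) as [E Hc].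
      exists k; split; auto. intro x. rewrite <- Hc.
      split; intros [h1 h2]; split; auto.
      * apply (proj1 (claim q x hq (trL _ _ _ h2 haq))); auto.
      * apply (proj2 (claim q x hq (trL _ _ _ h2 haq))); auto.
Qed.
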